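(* Let $k$ be a field, $Q=k[x,y,z]$, $\mathfrak m=(x,y,z)$, and let $I\subseteq\mathfrak m^2$ be a homogeneous integrally closed ideal. Then $[I:x]\cdot[I:(y,z)]\subseteq I$.
   Context: For ideals $I,L$ of $Q$, $I:L=\{f\in Q: fL\subseteq I\}$ and $I:f=I:(f)$. An ideal is integrally closed if it equals its integral closure. *)

(* Defs.v *)
(* Q = k[x,y,z] is modelled as {poly {poly {poly k}}}:
   x is the outer variable, y the middle one, z the innermost. *)
From HB Require Import structures.
From mathcomp Require Import all_boot all_order all_algebra.
Set Implicit Arguments. Unset Strict Implicit. Unset Printing Implicit Defensive.
Import GRing.Theory.
Local Open Scope ring_scope.

Section Defs.
Variable k : fieldType.

Definition Q := {poly {poly {poly k}}}.

Definition vx : Q := 'X.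
Definition vy : Q := ('X)%:P.
Definition vz : Q := ('X)%:P%:P.

Definition coef3 (p : Q) (a b c : nat) : k := ((p`_a)`_b)`_c.

Definition mono3 (a b c : nat) : Q := vx ^+ a * vy ^+ b * vz ^+ c.

Definition hcomp (d : nat) (p : Q) : Q :=
  \sum_(a < d.+1) \sum_(b < d.+1 - a)
     (coef3 p a b (d - a - b))%:P%:P%:P * mono3 a b (d - a - b).

Definition is_ideal (I : Q -> Prop) : Prop :=
  I 0 /\ (forall f g, I f -> I g -> I (f + g)) /\ (forall r f, I f -> I (r * f)).

Definition homogeneous_ideal (I : Q -> Prop) : Prop :=
  forall f, I f -> forall d, I (hcomp d f).

Definition subset_ideal (I J : Q -> Prop) : Prop := forall f, I f -> J f.

Definition ideal_mul (I J : Q -> Prop) (f : Q) : Prop :=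
  exists s : seq (Q * Q),
    (forall p, p \in s -> I p.1 /\ J p.2) /\ f = \sum_(p <- s) p.1 * p.2.

Fixpoint ideal_pow (I : Q -> Prop) (n : nat) : Q -> Prop :=
  match n with
  | 0 => fun _ => True
  | n.+1 => ideal_mul (ideal_pow I n) I
  end.

Definition ideal1 (a : Q) (f : Q) : Prop := exists u, f = u * a.
Definition ideal2 (a b : Q) (f : Q) : Prop := exists u v, f = u * a + v * b.
Definition ideal3 (a b c : Q) (f : Q) : Prop :=
  exists u v w, f = u * a + v * b + w * c.

Definition maxideal : Q -> Prop := ideal3 vx vy vz.

Definition colon (I L : Q -> Prop) (f : Q) : Prop := forall g, L g -> I (f * g).

Definition integral_over (I : Q -> Prop) (f : Q) : Prop :=
  exists (n : nat) (a : nat -> Q),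
    (0 < n)%N /\ (forall i, (1 <= i <= n)%N -> ideal_pow I i (a i)) /\
    f ^+ n + \sum_(1 <= i < n.+1) a i * f ^+ (n - i) = 0.

Definition integral_closure (I : Q -> Prop) : Q -> Prop := integral_over I.

Definition integrally_closed (I : Q -> Prop) : Prop :=
  forall f, integral_closure I f <-> I f.

End Defs.

(* Main.v *)
Require Import Defs.
From HB Require Import structures.
From mathcomp Require Import all_boot all_order all_algebra.
From mathcomp Require Import ring.
Local Open Scope ring_scope.
Import GRing.Theory.

Section Aux.
Variable k : fieldType.
Local Notation Q := (Q k).
Local Notation vx := (@vx k).
Local Notation vy := (@vy k).
Local Notation vz := (@vz k).

Lemma decomp0 (R : nzRingType) (p : {poly R}) :
  p = (p`_0)%:P + drop_poly 1 p * 'X.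
Proof.
rewrite -{1}(poly_take_drop 1 p) expr1; congr (_ + _).
by apply/polyP => i; rewrite coef_take_poly coefC; case: i.
Qed.

Definition c0 (p : Q) : k := ((p`_0)`_0)`_0.

Lemma c0M p q : c0 (p * q) = c0 p * c0 q.
Proof. by rewrite /c0 !coef0M. Qed.
Lemma c0D p q : c0 (p + q) = c0 p + c0 q.
Proof. by rewrite /c0 !coefD. Qed.

Lemma c0_zero_m (f : Q) : c0 f = 0 -> maxideal f.
Proof.
move=> H.
set f1 := drop_poly 1 f.
set g := f`_0.
set g1 := drop_poly 1 g.
set h := g`_0.
set h1 := drop_poly 1 h.
have Hh : h = 0%:P + h1 * 'X by rewrite -H /c0 -/g -/h; exact: decomp0.
have Hg : g = h%:P + g1 * 'X by exact: decomp0.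
have Hf : f = g%:P + f1 * 'X by exact: decomp0.
exists f1, (g1%:P), (h1%:P%:P).
rewrite /Defs.vx /Defs.vy /Defs.vz Hf Hg Hh.
rewrite !rmorphD !rmorphM /=.
rewrite !rmorph0; ring.
Qed.

Lemma m_c0 (f : Q) : maxideal f -> c0 f = 0.
Proof.
case=> u [v [w ->]].
rewrite !c0D !c0M.
have ->: c0 vx = 0 by rewrite /c0 /Defs.vx coefX /= coef0 coef0.
have ->: c0 vy = 0 by rewrite /c0 /Defs.vy coefC /= coefX /= coef0.
have ->: c0 vz = 0 by rewrite /c0 /Defs.vz coefC /= coefC /= coefX.
by rewrite !mulr0 !addr0.
Qed.

Definition lx (p : Q) : k := ((p`_1)`_0)`_0.
Definition ly (p : Q) : k := ((p`_0)`_1)`_0.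

Lemma lxM p q : c0 p = 0 -> c0 q = 0 -> lx (p * q) = 0.
Proof.
move=> Hp Hq; rewrite /lx coefM big_ord_recr /= big_ord1 /=.
rewrite !coefD !coef0M.
move: Hp Hq; rewrite /c0 => -> ->; ring.
Qed.

Lemma lyM p q : c0 p = 0 -> c0 q = 0 -> ly (p * q) = 0.
Proof.
move=> Hp Hq; rewrite /ly coef0M coefM big_ord_recr /= big_ord1 /=.
rewrite !coefD !coef0M.
move: Hp Hq; rewrite /c0 => -> ->; ring.
Qed.

Lemma sum_phi (phi : Q -> k) (s : seq (Q * Q)) :
  phi 0 = 0 -> (forall a b, phi (a + b) = phi a + phi b) ->
  (forall p, p \in s -> phi (p.1 * p.2) = 0) ->
  phi (\sum_(p <- s) p.1 * p.2) = 0.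
Proof.
move=> H0 HD Hs; rewrite big_seq.
apply: (big_ind (fun x => phi x = 0)) => //.
  by move=> x y Hx Hy; rewrite HD Hx Hy addr0.
Qed.

Lemma m2_prop (f : Q) : ideal_pow (@maxideal k) 2 f -> lx f = 0 /\ ly f = 0.
Proof.
case=> s [Hs ->].
have Hc : forall p, p \in s -> c0 p.1 = 0 /\ c0 p.2 = 0.
  move=> p /Hs [[t [Ht ->]] Hm]; split; last exact: m_c0.
  apply: sum_phi; first by rewrite /c0 !coef0.
    by move=> a b; rewrite c0D.
  by move=> q /Ht [_ /m_c0 Hq]; rewrite c0M Hq mulr0.
split; apply: sum_phi.
- by rewrite /lx !coef0.
- by move=> a b; rewrite /lx !coefD.
- by move=> p /Hc [H1 H2]; apply: lxM.
- by rewrite /ly !coef0.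
- by move=> a b; rewrite /ly !coefD.
- by move=> p /Hc [H1 H2]; apply: lyM.
Qed.

Lemma colx_m (f : Q) : ideal_pow (@maxideal k) 2 (f * vx) -> maxideal f.
Proof.
move=> /m2_prop [H _]; apply: c0_zero_m.
by move: H; rewrite /lx /Defs.vx coefMX /=.
Qed.

Lemma coly_m (f : Q) : ideal_pow (@maxideal k) 2 (f * vy) -> maxideal f.
Proof.
move=> /m2_prop [_ H]; apply: c0_zero_m.
by move: H; rewrite /ly /Defs.vy coefMC coefMX /=.
Qed.

Lemma mul_in (I : Q -> Prop) n a b :
  ideal_pow I n a -> I b -> ideal_pow I n.+1 (a * b).
Proof.
move=> Ha Hb; exists [:: (a, b)]; split; last by rewrite big_seq1.
by move=> p; rewrite inE => /eqP ->.
Qed.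

Lemma pow_add (I : Q -> Prop) n a b :
  ideal_pow I n.+1 a -> ideal_pow I n.+1 b -> ideal_pow I n.+1 (a + b).
Proof.
move=> [s [Hs ->]] [t [Ht ->]]; exists (s ++ t); split.
  by move=> p; rewrite mem_cat => /orP [/Hs | /Ht].
by rewrite big_cat.
Qed.

Lemma pow_opp (I : Q -> Prop) n a :
  is_ideal I -> ideal_pow I n.+1 a -> ideal_pow I n.+1 (- a).
Proof.
move=> [_ [_ HM]] [s [Hs ->]].
exists [seq (p.1, -1 * p.2) | p <- s]; split.
  move=> p /mapP [q /Hs [H1 H2] ->]; split => //=; exact: HM.
rewrite big_map -sumrN; apply: eq_bigr => p _ /=; ring.
Qed.

Lemma pow1 (I : Q -> Prop) a : I a -> ideal_pow I 1 a.
Proof. by move=> H; rewrite -[a]mul1r; apply: mul_in. Qed.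

Lemma pow2 (I : Q -> Prop) a b : I a -> I b -> ideal_pow I 2 (a * b).
Proof. by move=> Ha Hb; apply: mul_in => //; apply: pow1. Qed.

Lemma pow3 (I : Q -> Prop) a b c : I a -> I b -> I c -> ideal_pow I 3 (a * b * c).
Proof. by move=> Ha Hb Hc; apply: mul_in => //; apply: pow2. Qed.

Lemma det_trick (I : Q -> Prop) (h x y z a11 a12 a13 a21 a22 a23 a31 a32 a33 : Q) :
  is_ideal I -> x != 0 ->
  I a11 -> I a12 -> I a13 -> I a21 -> I a22 -> I a23 -> I a31 -> I a32 -> I a33 ->
  h * x = a11 * x + a12 * y + a13 * z ->
  h * y = a21 * x + a22 * y + a23 * z ->
  h * z = a31 * x + a32 * y + a33 * z ->
  integral_over I h.
Proof.
move=> HI x0 H11 H12 H13 H21 H22 H23 H31 H32 H33 E1 E2 E3.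
pose A1 := - (a11 + a22 + a33).
pose A2 := a11 * a22 - a12 * a21 + (a11 * a33 - a13 * a31) + (a22 * a33 - a23 * a32).
pose A3 := - (a11 * a22 * a33 - a11 * a23 * a32 - a12 * a21 * a33 + a12 * a23 * a31
              + a13 * a21 * a32 - a13 * a22 * a31).
exists 3%N, (fun i => if i == 1%N then A1 else if i == 2%N then A2 else A3).
split => //; split.
  case=> [|[|[|[|i]]]] // _; [change (ideal_pow I 1 A1); rewrite /A1 | change (ideal_pow I 2 A2); rewrite /A2 | change (ideal_pow I 3 A3); rewrite /A3].
  - by apply: (@pow_opp I 0) => //; repeat apply: (@pow_add I 0); apply: pow1.
  - by repeat first [apply: (@pow_add I 1) | apply: (@pow_opp I 1) => //]; apply: pow2.
  - by repeat first [apply: (@pow_add I 2) | apply: (@pow_opp I 2) => //]; apply: pow3.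
rewrite big_nat_recr // big_nat_recr // big_nat1 /=.
apply: (mulIf x0); rewrite mul0r.
transitivity ((h * x - (a11 * x + a12 * y + a13 * z)) * ((h - a22) * (h - a33) - a23 * a32)
      + (h * y - (a21 * x + a22 * y + a23 * z)) * (a12 * (h - a33) + a13 * a32)
      + (h * z - (a31 * x + a32 * y + a33 * z)) * (a12 * a23 + a13 * (h - a22))).
  rewrite /A1 /A2 /A3; ring.
by rewrite E1 E2 E3 !subrr !mul0r !addr0.
Qed.

End Aux.

Theorem mainTheorem9 (k : fieldType) (I : Q k -> Prop) :
  is_ideal I ->
  homogeneous_ideal I ->
  subset_ideal I (ideal_pow (@maxideal k) 2) ->
  integrally_closed I ->
  subset_ideal
    (ideal_mul (colon I (ideal1 (@vx k))) (colon I (ideal2 (@vy k) (@vz k))))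
    I.
Proof.
move=> HI _ Hsub Hic F [s [Hs ->]].
have [H0 [HD HM]] := HI.
rewrite big_seq; apply: (big_ind I) => //.
move=> [f g] /Hs [/= Hf Hg].
have Ifx : I (f * (@vx k)) by apply: Hf; exists 1; rewrite mul1r.
have Igy : I (g * (@vy k)) by apply: Hg; exists 1, 0; rewrite mul1r mul0r addr0.
have Igz : I (g * (@vz k)) by apply: Hg; exists 0, 1; rewrite mul1r mul0r add0r.
have [f1 [f2 [f3 Ef]]] := @colx_m k _ (Hsub _ Ifx).
have [g1 [g2 [g3 Eg]]] := @coly_m k _ (Hsub _ Igy).
apply/Hic.
apply: (@det_trick k I (f * g) (@vx k) (@vy k) (@vz k)
   (g1 * (f * (@vx k))) (g2 * (f * (@vx k))) (g3 * (f * (@vx k)))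
   (f1 * (g * (@vy k))) (f2 * (g * (@vy k))) (f3 * (g * (@vy k)))
   (f1 * (g * (@vz k))) (f2 * (g * (@vz k))) (f3 * (g * (@vz k)))).
- by [].
- by rewrite /vx polyX_eq0.
all: try (by apply: HM).
- have -> : f * g * (@vx k) = (f * (@vx k)) * g by ring.
  rewrite {1}Eg; ring.
- have -> : f * g * (@vy k) = (g * (@vy k)) * f by ring.
  rewrite {1}Ef; ring.
- have -> : f * g * (@vz k) = (g * (@vz k)) * f by ring.
  rewrite {1}Ef; ring.
Qed.
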